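(* Let $q$ be a prime power and let $l$ be an odd prime with $l\nmid q$. Then every monic irreducible factor of $x^{l}-1$ in $\mathbb{F}_{q^2}[x]$ is SCRIM if and only if $\mathrm{ord}_l(q^2)$ is odd and $\mathrm{ord}_l(q)$ is even.
   Context: $\mathbb{F}_{q^2}$ is the finite field with $q^2$ elements. For $\alpha\in\mathbb{F}_{q^2}$ put $\bar\alpha=\alpha^q$, and for $f(x)=\sum_i f_ix^i\in\mathbb{F}_{q^2}[x]$ put $\overline{f(x)}=\sum_i \bar f_i x^i$. For $f(x)$ with $f(0)\neq 0$, its reciprocal is $f^*(x)=x^{\deg f}f(0)^{-1}f(1/x)$ and its conjugate-reciprocal is $f^\dagger(x)=\overline{f^*(x)}$. A polynomial $f(x)\in\mathbb{F}_{q^2}[x]$ is SCRIM (self-conjugate-reciprocal irreducible monic) if it is monic, irreducible, $f(0)\ne 0$, and $f(x)=f^\dagger(x)$. For coprime integers $m,a$, $\mathrm{ord}_m(a)$ is the least positive $s$ with $a^s\equiv 1 \pmod m$. *)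

(* Defs.v *)
From HB Require Import structures.
From mathcomp Require Import all_boot all_order all_algebra all_field.
Set Implicit Arguments. Unset Strict Implicit. Unset Printing Implicit Defensive.
Import GRing.Theory.
Local Open Scope ring_scope.

(* ord_m(a): least positive s with a^s = 1 (mod m).  Since ord_m(a) <= totient m < m
   whenever coprime m a and 1 < m, searching s in 1..m is exhaustive in that case. *)
Definition ord_mod (m a : nat) : nat :=
  (find (fun s => a ^ s.+1 == 1 %[mod m]) (iota 0 m)).+1.

Definition conjq {F : finFieldType} (q : nat) (f : {poly F}) : {poly F} :=
  map_poly (fun a : F => a ^+ q) f.

(* reciprocal: x^(deg f) f(0)^{-1} f(1/x) *)
Definition recip {F : fieldType} (f : {poly F}) : {poly F} :=
  (f`_0)^-1 *: \poly_(i < size f) f`_((size f).-1 - i).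

Definition conj_recip {F : finFieldType} (q : nat) (f : {poly F}) : {poly F} :=
  conjq q (recip f).

Definition SCRIM {F : finFieldType} (q : nat) (f : {poly F}) : Prop :=
  [/\ f \is monic, irreducible_poly f, f`_0 != 0 & f = conj_recip q f].

(* Main.v *)
Require Import Defs.
From HB Require Import structures.
From mathcomp Require Import all_boot all_order all_algebra all_field.
Import GRing.Theory.
Local Open Scope ring_scope.
From Stdlib Require Import Classical.
From mathcomp Require Import all_fingroup all_solvable zify ring.
Set Implicit Arguments. Unset Strict Implicit. Unset Printing Implicit Defensive.
Local Open Scope nat_scope.


Lemma ord_modP (m a : nat) : prime m -> coprime a m ->
  [/\ 0 < ord_mod m a, a ^ ord_mod m a = 1 %[mod m] &
      forall s, 0 < s -> a ^ s = 1 %[mod m] -> ord_mod m a <= s].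
Proof.
move=> pm cam; set P := (fun s => a ^ s.+1 == 1 %[mod m]).
have m1 := prime_gt1 pm.
have hasP : has P (iota 0 m).
  apply/hasP; exists (m.-1.-1).
    by rewrite mem_iota /=; lia.
  rewrite /P; apply/eqP; have -> : (m.-1.-1).+1 = m.-1 by lia.
  by have := Euler_exp_totient cam; rewrite totient_prime.
have fs : find P (iota 0 m) < m by by have := hasP; rewrite has_find size_iota.
split; first by [].
  have := nth_find 0 hasP; rewrite /P nth_iota // add0n => /eqP.
  by rewrite /ord_mod.
move=> s s0 hs; rewrite /ord_mod; case: leqP => // lt.
have hlt : s.-1 < find P (iota 0 m).
  move: lt s0; set F := find P _; lia.
have := before_find 0 hlt; rewrite /P nth_iota; last by lia.
by rewrite add0n prednK // hs eqxx.
Qed.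

Lemma ord_modD (m a s : nat) : prime m -> coprime a m ->
  (a ^ s == 1 %[mod m]) = (ord_mod m a %| s).
Proof.
move=> pm cam; have [d0 hd hmin] := ord_modP pm cam.
set d := ord_mod m a in d0 hd hmin *.
have e : a ^ s = a ^ (s %% d) %[mod m].
  have -> : a ^ s = (a ^ d) ^ (s %/ d) * a ^ (s %% d).
    by rewrite -expnM -expnD mulnC -divn_eq.
  by rewrite -modnMml -modnXm hd modnXm exp1n modnMml mul1n.
rewrite e /dvdn; case: (posnP (s %% d)) => [->|pos]; first by rewrite eqxx.
apply/negbTE/negP => /eqP h; have := hmin _ pos h; rewrite leqNgt ltn_pmod //.
Qed.

Section NT.
Variables (l q : nat).
Hypotheses (pl : prime l) (ol : odd l) (cq : coprime q l).
Local Notation d := (ord_mod l q).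

Lemma l_gt2 : 2 < l.
Proof. have := prime_gt1 pl; case: l ol => [|[|[|]]] //. Qed.

Lemma q_gt0 : 0 < q.
Proof. by case: q cq => //; rewrite /coprime gcd0n => /eqP e; move: pl; rewrite e. Qed.

Lemma dvd_sqr1 x : 0 < x -> l %| x ^ 2 - 1 -> (l %| x - 1) || (l %| x + 1).
Proof.
move=> x0; have -> : x ^ 2 - 1 = (x - 1) * (x + 1).
  by rewrite -(exp1n 2) subn_sqr addnC.
by rewrite Euclid_dvdM.
Qed.

Lemma modeq1 y : 0 < y -> (y == 1 %[mod l]) = (l %| y - 1).
Proof. by move=> y0; rewrite eqn_mod_dvd. Qed.

Lemma ordq2 : ~~ odd d -> ord_mod l (q ^ 2) = d./2.
Proof.
move=> ev; have [d0 hd _] := ord_modP pl cq.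
have cq2 : coprime (q ^ 2) l by rewrite coprimeXl.
have [e0 he _] := ord_modP pl cq2.
have dE : d = (d./2).*2 by rewrite -[LHS]odd_double_half (negbTE ev).
apply/eqP; rewrite eqn_dvd; apply/andP; split.
  rewrite -ord_modD // -expnM mulnC muln2 -dE; by apply/eqP.
have : d %| 2 * ord_mod l (q ^ 2) by rewrite -ord_modD // expnM; apply/eqP.
by rewrite {1}dE -muln2 mulnC dvdn_pmul2l.
Qed.

Lemma NT_back : odd (ord_mod l (q ^ 2)) && ~~ odd d ->
  exists m, l %| q ^ d.-1 + (q ^ 2) ^ m.
Proof.
case/andP=> oe ev; rewrite ordq2 // in oe.
have [d0 hd hmin] := ord_modP pl cq.
set h := d./2 in oe *.
have dE : d = h.*2 by rewrite /h -[LHS]odd_double_half (negbTE ev).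
have h0 : 0 < h by move: d0; rewrite dE; case: (h).
have q0 := q_gt0.
have : l %| (q ^ h) ^ 2 - 1.
  rewrite -modeq1 ?expn_gt0 ?q0 // -expnM muln2; apply/eqP; move: hd; rewrite dE. done.
have hx : 0 < q ^ h by rewrite expn_gt0 q0.
move=> H; case/orP: (dvd_sqr1 hx H) => [|hdv].
  rewrite -modeq1 // => /eqP /(hmin _ h0); rewrite dE; lia.
exists (h + h./2).
have -> : (q ^ 2) ^ (h + h./2) = q ^ d.-1 * q ^ h.
  rewrite -expnM -expnD; congr (q ^ _); rewrite dE.
  have := odd_double_half h; rewrite oe; move: (h./2) => g; move: (h) => a; clear; lia.
by rewrite -{1}(muln1 (q ^ d.-1)) -mulnDr addnC dvdn_mull.
Qed.

Lemma NT_fwd i : l %| q ^ d.-1 + (q ^ 2) ^ i ->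
  odd (ord_mod l (q ^ 2)) && ~~ odd d.
Proof.
move=> hdv; have [d0 hd hmin] := ord_modP pl cq.
have q0 := q_gt0; have l2 := l_gt2.
set x := q ^ (2 * i).+1.
have x0 : 0 < x by rewrite expn_gt0 q0.
have hx : l %| x + 1.
  have : l %| q * (q ^ d.-1 + (q ^ 2) ^ i) by rewrite dvdn_mull.
  rewrite mulnDr -expnS prednK // -expnM -expnS -/x.
  rewrite /dvdn -modnDml hd modnDml addnC.
  done.
have hx2 : l %| x ^ 2 - 1.
  have -> : x ^ 2 - 1 = (x - 1) * (x + 1) by rewrite -(exp1n 2) subn_sqr addnC.
  by rewrite dvdn_mull.
have dd : d %| 2 * (2 * i).+1.
  rewrite -ord_modD // mulnC expnM -/x modeq1; first exact hx2. by rewrite expn_gt0 x0.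
have ndd : ~~ (d %| (2 * i).+1).
  apply/negP => h1; move: h1; rewrite -ord_modD // -/x modeq1 // => h1.
  have := dvdn_sub hx h1.
  have -> : x + 1 - (x - 1) = 2 by rewrite subnBA // -addnA addKn.
  move/(dvdn_leq (isT : 0 < 2)); rewrite leqNgt l2. done.
have ev : ~~ odd d.
  apply/negP => od; move/negP: ndd; apply.
  have cd2 : coprime d 2 by rewrite coprimen2 od.
  by rewrite -(Gauss_dvdr _ cd2).
rewrite ev andbT ordq2 //.
have dE : d = (d./2).*2 by rewrite -[LHS]odd_double_half (negbTE ev).
have hd2 : d./2 %| (2 * i).+1.
  by move: dd; rewrite {1}dE -muln2 mulnC dvdn_pmul2l.
case: (boolP (odd d./2)) => // ev2.
have h2 : 2 %| d./2 by rewrite dvdn2 ev2.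
by have := dvdn_trans h2 hd2; rewrite dvdn2 /= oddM.
Qed.
End NT.

Local Open Scope ring_scope.


Lemma frob_horner (R : comNzRingType) (n : nat) (hn : [pchar R].-nat n)
  (h : {poly R}) (x : R) :
  (h.[x]) ^+ n = (map_poly (fun a => a ^+ n) h).[x ^+ n].
Proof.
have n0 : (0 < n)%N by case/andP: hn.
have f0 : (0 : R) ^+ n = 0 by rewrite expr0n; move: n0; case: (n).
rewrite (horner_coef_wide _ (size_poly _ _)) horner_coef.
rewrite (big_morph (fun y => y ^+ n) (fun a b => exprDn_pchar a b hn) f0).
  by apply: eq_bigr => i _; rewrite coef_poly ltn_ord exprMn exprAC.
Qed.

Lemma recip_root (F L : fieldType) (phi : {rmorphism F -> L}) (f : {poly F}) (x y : L) :
  x * y = 1 ->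
  (map_poly phi (recip f)).[x] = (phi f`_0)^-1 * x ^+ (size f).-1 * (map_poly phi f).[y].
Proof.
move=> xy; set n := size f.
have sz : (size (recip f) <= n)%N by rewrite /recip (leq_trans (size_scale_leq _ _)) ?size_poly.
rewrite (horner_coef_wide _ (_ : size _ <= n)%N); last by rewrite size_map_poly.
rewrite (horner_coef_wide _ (_ : size _ <= n)%N); last by rewrite size_map_poly.
rewrite -mulrA big_distrr big_distrr /= (reindex_inj rev_ord_inj) /=.
apply: eq_bigr => i _.
have hi : (n - i.+1 < n)%N by move: (ltn_ord i); lia.
rewrite !coef_map /recip coefZ coef_poly hi.
have -> : (n.-1 - (n - i.+1) = i)%N by move: (ltn_ord i); lia.
transitivity (phi ((f`_0)^-1 * f`_i) * x ^+ (n - i.+1)); first by []. rewrite rmorphM fmorphV.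
have -> : n.-1 = (n - i.+1 + i)%N by move: (ltn_ord i); lia.
have e : x ^+ i * y ^+ i = 1 by rewrite -exprMn xy expr1n.
rewrite exprD.
transitivity ((x ^+ i * y ^+ i) * ((phi f`_0)^-1 * phi f`_i * x ^+ (n - i.+1))).
  by rewrite e mul1r.
ring.
Qed.

Lemma root_dvd (F : fieldType) (L : fieldExtType F) (f h : {poly F}) (t : L) :
  irreducible_poly f -> root (map_poly (in_alg L) f) t ->
  root (map_poly (in_alg L) h) t -> f %| h.
Proof.
move=> irr rf rh; set g := gcdp f h.
have rg : root (map_poly (in_alg L) g) t by rewrite /g gcdp_map root_gcd rf rh.
have sg : size g != 1%N.
  apply/negP => /size_poly1P [c c0 gE]; move: rg.
  by rewrite gE map_polyC rootC fmorph_eq0 (negbTE c0).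
have gf : g %= f := irr g sg (dvdp_gcdl f h).
by rewrite -(eqp_dvdl _ gf) dvdp_gcdr.
Qed.

Lemma split_root (F : finFieldType) (f : {poly F}) : (1 < size f)%N ->
  exists (L : splittingFieldType F) (t : L), root (map_poly (in_alg L) f) t.
Proof.
move=> sf; have nz : f != 0 by rewrite -size_poly_gt0; case: (size f) sf.
have [L [rs Hrs _]] := FinSplittingFieldFor nz; exists L.
case: rs Hrs => [|z rs] H.
  move: H; rewrite big_nil -size_poly_eq1 /= size_map_poly => /eqP s1.
  by rewrite s1 in sf.
by exists z; rewrite (eqp_root H) big_cons rootM root_XsubC eqxx.
Qed.

Lemma irr_factor (F : fieldType) (p : {poly F}) : (1 < size p)%N ->
  exists f, [/\ f \is monic, irreducible_poly f & f %| p].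
Proof.
have main : forall n (p : {poly F}), (size p <= n)%N -> (1 < size p)%N ->
    exists f, irreducible_poly f /\ f %| p.
  elim=> [|n IH] q sq s1; first by move: s1; rewrite ltnNge (leq_trans sq).
  case: (classic (irreducible_poly q)) => [irr|nirr].
    by exists q; split.
  have : exists g : {poly F}, [/\ size g != 1%N, g %| q & ~~ (g %= q)].
    apply: NNPP => H; apply: nirr; split => // g g1 gq.
    apply/negPn/negP => ng; apply: H; by exists g.
  case=> g [g1 gq ng].
  have q0 : q != 0 by rewrite -size_poly_gt0; case: (size q) s1.
  have g0 : g != 0 by apply: contraNneq q0 => g0; move: gq; rewrite g0 dvd0p.
  have sgq : (size g < size q)%N.
    rewrite ltn_neqAle dvdp_size_eqp // ng dvdp_leq //.
  have sg : (1 < size g)%N.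
    by move: g1 g0; rewrite -size_poly_eq0; case: (size g) => [|[]].
  have sgn : (size g <= n)%N by rewrite -ltnS (leq_trans sgq).
  have [f [irr fg]] := IH g sgn sg.
  by exists f; split => //; apply: dvdp_trans fg gq.
move=> s1; have [f [[sf irr] fp]] := main _ p (leqnn _) s1.
have f0 : f != 0 by rewrite -size_poly_gt0; case: (size f) sf.
have c0 : (lead_coef f)^-1 != 0 by rewrite invr_eq0 lead_coef_eq0.
exists ((lead_coef f)^-1 *: f); split.
- by apply/monicP; rewrite lead_coefZ mulVf // lead_coef_eq0.
- split; first by rewrite size_scale.
  move=> g g1; rewrite dvdpZr // => gf; apply: eqp_trans (irr g g1 gf) _.
  by rewrite eqp_sym eqp_scale.
- by rewrite dvdpZl.
Qed.

Lemma gal_root (F : finFieldType) (L : splittingFieldType F) (f : {poly F}) (t y : L) :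
  irreducible_poly f -> root (map_poly (in_alg L) f) t ->
  root (map_poly (in_alg L) f) y -> exists i, y = t ^+ (#|F| ^ i).
Proof.
move=> irr rt ry.
have [g gE] := polyOver1P (minPolyOver 1 t).
have fg : f %| g by apply: (root_dvd irr rt); rewrite -gE root_minPoly.
have ry' : root (minPoly 1 t) y.
  by rewrite gE; apply: root_dvdp ry; rewrite dvdp_map.
have gal1 := finField_galois (sub1v {:L}%AS).
have nKE : normalField 1%AS {:L}%AS by case/and3P: gal1.
have [x xG xt] := normalField_root_minPoly (sub1v _) nKE (memvf t) ry'.
have [alpha gen Dalpha] := finField_galois_generator (sub1v {:L}%AS).
move: xG; rewrite (eqP gen) => /cycleP [i xE].
exists i; rewrite -xt xE; elim: i {xE} => [|i IH].
  by rewrite expg0 gal_id expn0 expr1.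
rewrite expgSr galM ?memvf // IH Dalpha ?memvf // dimv1 expn1 -exprM expnSr.
done.
Qed.

Lemma in_algX (F : fieldType) (L : fieldExtType F) (a : F) n :
  in_alg L (a ^+ n) = (in_alg L a) ^+ n.
Proof. exact: rmorphXn. Qed.

Lemma coef_conjq (F : finFieldType) q (h : {poly F}) i : (0 < q)%N -> (conjq q h)`_i = (h`_i) ^+ q.
Proof.
move=> q0; rewrite /conjq (@coef_map_id0 _ _ (fun a => a ^+ q)) //.
by rewrite expr0n; case: (q) q0.
Qed.

Lemma conjq_horner (F : finFieldType) (L : fieldExtType F) (q : nat)
  (hq : [pchar L].-nat q) (h : {poly F}) (s : L) :
  (map_poly (in_alg L) (conjq q h)).[s ^+ q] = ((map_poly (in_alg L) h).[s]) ^+ q.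
Proof.
have q0 : (0 < q)%N by case/andP: hq.
have z0 : forall R : nzRingType, (0 : R) ^+ q = 0.
  by move=> R; rewrite expr0n; move: q0; case: (q).
rewrite frob_horner //; congr (_.[_]); apply/polyP => i.
rewrite coef_map coef_conjq // (@coef_map_id0 _ _ (fun a : L => a ^+ q)) ?z0 // coef_map. exact: (rmorphXn (in_alg L)).
Qed.

Lemma fix_horner (F : finFieldType) (L : fieldExtType F) (f : {poly F}) (u : L) (m : nat) :
  [pchar L].-nat ((#|F| ^ m)%N) ->
  (map_poly (in_alg L) f).[u ^+ ((#|F| ^ m)%N)] = ((map_poly (in_alg L) f).[u]) ^+ ((#|F| ^ m)%N).
Proof.
move=> hq; have q0 : (0 < (#|F| ^ m))%N by case/andP: hq.
have z0 : (0 : L) ^+ ((#|F| ^ m)%N) = 0.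
  by rewrite expr0n; move: q0; case: (#|F| ^ m)%N.
rewrite frob_horner //; congr (_.[_]); apply/polyP => i.
rewrite (@coef_map_id0 _ _ (fun a : L => a ^+ ((#|F| ^ m)%N))) // !coef_map.
transitivity (in_alg L (f`_i ^+ (#|F| ^ m)%N)); last exact: (rmorphXn (in_alg L)).
congr (in_alg L _).
elim: m {hq q0 z0} => [|m IH]; first by rewrite expr1.
by rewrite expnS exprM expf_card.
Qed.

Lemma conj_recip_props (F : finFieldType) (q : nat) (f : {poly F}) :
  (0 < q)%N -> f`_0 != 0 -> conj_recip q f \is monic /\ size (conj_recip q f) = size f.
Proof.
move=> q0 f0; set n := size f.
have z0 : (0 : F) ^+ q = 0 by rewrite expr0n; move: q0; case: (q).
have n0 : (0 < n)%N.
  by rewrite lt0n size_poly_eq0; apply: contraNneq f0 => ->; rewrite coef0.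
have E : f`_(n.-1 - n.-1) != 0 by rewrite subnn.
have c0 : (f`_0)^-1 != 0 by rewrite invr_eq0.
have lr : lead_coef (recip f) = 1.
  by rewrite /recip lead_coefZ lead_coef_poly // subnn mulVf.
have sr : size (recip f) = n by rewrite /recip size_scale // size_poly_eq.
have l1 : (fun a : F => a ^+ q) (lead_coef (recip f)) != 0 by rewrite lr expr1n oner_eq0.
split.
  apply/monicP; rewrite /conj_recip /conjq lead_coef_map_id0 //; try exact: z0.
  apply: (etrans (congr1 (fun x => x ^+ q) lr)); exact: expr1n.
rewrite /conj_recip /conjq.
exact: (etrans (size_map_poly_id0 (f := fun a : F => a ^+ q) l1) sr).
Qed.


Unset Implicit Arguments.

Theorem theorem2p2 (F : finFieldType) (q l : nat) :
  (exists p k : nat, [/\ prime p, (0 < k)%N & q = (p ^ k)%N]) ->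
  #|F| = (q ^ 2)%N ->
  prime l -> odd l -> ~~ (l %| q)%N ->
  (forall f : {poly F},
      f \is monic -> irreducible_poly f -> f %| 'X^l - 1 -> SCRIM q f)
  <-> (odd (ord_mod l (q ^ 2)) /\ ~~ odd (ord_mod l q)).
Proof.
move=> [p [k [pp k0 qE]]] cardF pl ol nlq.
have cardF' : #|F| = (p ^ (k * 2))%N by rewrite cardF qE expnM.
have pcF : p \in [pchar F] := card_finPcharP cardF' pp.
have cq : coprime q l by rewrite coprime_sym prime_coprime.
have q0 : (0 < q)%N by rewrite qE expn_gt0 prime_gt0.
have l1 : (1 < l)%N := prime_gt1 pl.
have [d0 hd _] := ord_modP pl cq.
have NqE : (q ^ (ord_mod l q).-1 * q = q ^ (ord_mod l q))%N by rewrite -expnSr prednK.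
have pcL : forall L : splittingFieldType F, p \in [pchar L].
  by move=> L; rewrite (pchar_lalg L).
have natL : forall (L : splittingFieldType F) e, [pchar L].-nat (p ^ e)%N.
  by move=> L e; rewrite pnatX pnatE // pcL.
have qnat : forall L : splittingFieldType F, [pchar L].-nat q.
  by move=> L; rewrite qE natL.
have Fnat : forall (L : splittingFieldType F) m, [pchar L].-nat (#|F| ^ m)%N.
  by move=> L m; rewrite cardF' -expnM natL.
have z0 : forall (L : splittingFieldType F) n, (0 < n)%N -> (0 : L) ^+ n = 0.
  by move=> L [|n] //; rewrite exprS mul0r.
have tl : forall (L : splittingFieldType F) (t : L) f, f %| 'X^l - 1 ->
    root (map_poly (in_alg L) f) t -> t ^+ l = 1.
  move=> L t f fd rt.
  have : root (map_poly (in_alg L) ('X^l - 1)) t by apply: root_dvdp rt; rewrite dvdp_map.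
  by rewrite rmorphB /= map_polyXn rmorph1 rootE !hornerE subr_eq0 => /eqP.
have sqE : forall (L : splittingFieldType F) (t : L), t ^+ l = 1 ->
    (t ^+ (q ^ (ord_mod l q).-1)%N) ^+ q = t.
  move=> L t tl1; rewrite -exprM NqE -(expr_mod _ tl1) hd modn_small //.
split.
- move=> H.
  pose Phi : {poly F} := \sum_(i < l) 'X^i.
  have XE : 'X^l - 1 = ('X - 1) * Phi := subrX1 'X l.
  have s2 : size ('X - 1 : {poly F}) = 2%N by rewrite -polyC1 size_XsubC.
  have Phi0 : Phi != 0.
    apply/eqP => P0; move: (size_Xn_sub_1 F (ltnW l1)).
    by rewrite XE P0 mulr0 size_poly0.
  have sPhi : (1 < size Phi)%N.
    move: (size_Xn_sub_1 F (ltnW l1)); rewrite XE size_mul ?s2 //.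
      by move=> e; rewrite -[size Phi]/(2 + size Phi).-1.-1 e.
    by rewrite -size_poly_eq0 s2.
  have [f [fm firr fP]] := irr_factor sPhi.
  have fd : f %| 'X^l - 1 by rewrite XE dvdp_mull.
  have [_ _ f0 fE] := H f fm firr fd.
  have [L [t rt]] := split_root firr.1.
  have tl1 := tl L t f fd rt.
  have t1 : t != 1.
    apply/eqP => t1.
    have : root (map_poly (in_alg L) Phi) t by apply: root_dvdp rt; rewrite dvdp_map.
    rewrite t1 rootE -(rmorph1 (in_alg L)) horner_map fmorph_eq0 /Phi horner_sum.
    under eq_bigr do rewrite hornerXn expr1n.
    rewrite sumr_const card_ord -(dvdn_pcharf pcF) dvdn_prime2 // => /eqP pl'.
    by move: nlq; rewrite qE -pl' dvdn_exp.
  have [m prim ml] := prim_order_exists (prime_gt0 pl) tl1.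
  have ml' : m = l.
    case/primeP: pl => _ /(_ m ml) /orP [/eqP m1|/eqP //].
    by move: prim; rewrite m1 => /prim_expr_order; rewrite expr1 => /eqP; rewrite (negbTE t1).
  rewrite ml' in prim.
  have t0 : t != 0.
    by apply/eqP => t0; move: tl1; rewrite t0 z0 ?prime_gt0 // => /eqP; rewrite eq_sym oner_eq0.
  set N := (q ^ (ord_mod l q).-1)%N.
  set s := t ^+ N.
  have sq : s ^+ q = t := sqE L t tl1.
  set y := t ^+ (l - N %% l).
  have dN : (l %| N + (l - N %% l))%N.
    have hlt : (N %% l < l)%N := ltn_pmod N (prime_gt0 pl).
    by rewrite /dvdn -modnDml (subnKC (ltnW hlt)) modnn.
  have sy : s * y = 1.
    by rewrite /s /y -exprD -(expr_mod _ tl1) (eqP dN) expr0.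
  have s0 : s != 0 by rewrite expf_neq0.
  have rdag : root (map_poly (in_alg L) (conj_recip q f)) t by rewrite -fE.
  have ry : root (map_poly (in_alg L) f) y.
    have e1 : ((map_poly (in_alg L) (recip f)).[s]) ^+ q == 0.
      by move: rdag; rewrite rootE -{1}sq /conj_recip (conjq_horner (qnat L)); try exact: id.
    move: e1; rewrite expf_eq0 q0 /=.
    rewrite (recip_root (in_alg L) f sy) !mulf_eq0 invr_eq0 fmorph_eq0 (negbTE f0).
    by rewrite expf_eq0 (negbTE s0) andbF.
  have [i yi] := gal_root firr rt ry.
  have e1 : (l - N %% l == (#|F| ^ i)%N %[mod l])%N.
    by rewrite -(eq_prim_root_expr prim) -yi.
  apply/andP; apply: (NT_fwd pl ol cq (i := i)).
  rewrite -/N /dvdn -modnDmr -cardF -(eqP e1) modnDmr.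
  exact: dN.
- case=> oe ev.
  have [m hm] : exists m, (l %| q ^ (ord_mod l q).-1 + (q ^ 2) ^ m)%N.
    by apply: (NT_back pl ol cq); rewrite oe ev.
  move=> f fm firr fd.
  have f0 : f`_0 != 0.
    apply/eqP => f00; have r0 : root f 0 by rewrite rootE horner_coef0 f00.
    have := root_dvdp fd r0; rewrite rootE !hornerE expr0n eqn0Ngt prime_gt0 //=.
    by rewrite sub0r oppr_eq0 oner_eq0.
  split => //.
  have [L [t rt]] := split_root firr.1.
  have tl1 := tl L t f fd rt.
  set N := (q ^ (ord_mod l q).-1)%N in hm.
  set s := t ^+ N.
  have sq : s ^+ q = t := sqE L t tl1.
  set y := t ^+ (#|F| ^ m)%N.
  have sy : s * y = 1.
    by rewrite /s /y -exprD -(expr_mod _ tl1) cardF (eqP hm) expr0.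
  have rdag : root (map_poly (in_alg L) (conj_recip q f)) t.
    have e2 : (map_poly (in_alg L) (recip f)).[s] = 0.
      rewrite (recip_root (in_alg L) f sy).
      rewrite /y fix_horner ?Fnat // (rootP rt) z0 ?expn_gt0 ?cardF ?expn_gt0 ?q0 //.
      by rewrite mulr0.
    rewrite rootE -{1}sq /conj_recip (conjq_horner (qnat L)).
    apply/eqP; apply: (etrans (congr1 (fun z => z ^+ q) e2)); exact: z0.
  have fdag := root_dvd firr rt rdag.
  have [cm cs] := conj_recip_props q0 f0.
  apply/eqP; rewrite -(eqp_monic fm cm) -(dvdp_size_eqp fdag) cs.
  exact: eqxx.
Qed.
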